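(* For all integers $k,n\geq1$ the following identity holds in $\mathcal{MS}(k,n)$: $$\Delta^{(n)}\circ\mu^{(k)}=\sum_{a\in A(k,n)}\langle a\rangle,$$ where $A(k,n)$ is the set of sequences $a=(a_1,\dots,a_k)$ of non-negative integers with $1+a_1+\dots+a_k=n$ and $\langle a\rangle\in\mathcal{MS}(k,n)$ is the element described in the context.
   Context: Fix a commutative ring $k$ (the base ring; not to be confused with the integer $k$ in the claim); chain complexes over it with the Koszul sign rule. A prop $\mathcal{P}$ is a strict symmetric monoidal category enriched in chain complexes generated by one object, $\mathcal{P}(n,m)$ the complex of morphisms from $n$ to $m$ copies; $\circ$ vertical composition, $\otimes$ horizontal composition, $\mathrm{id}\in\mathcal{P}(1,1)$. The prop $\mathcal{S}$: free prop on the free $\Sigma$-bimodule generated by $\varepsilon\in\mathcal{S}(1,0)_0$, $\Delta\in\mathcal{S}(1,2)_0$, $\mu\in\mathcal{S}(2,1)_1$, with derivation differential $\partial\varepsilon=0$, $\partial\Delta=0$, $\partial\mu=(\varepsilon\otimes\mathrm{id})-(\mathrm{id}\otimes\varepsilon)$, modulo the dg prop ideal generated by $\varepsilon\circ\mu$, $(\varepsilon\otimes\mathrm{id})\circ\Delta-\mathrm{id}$, $(\mathrm{id}\otimes\varepsilon)\circ\Delta-\mathrm{id}$. $\mathcal{MS}$ is the quotient of $\mathcal{S}$ by the dg prop ideal generated additionally by $\mu-\mu\cdot(12)$, $\mu\circ(\mu\otimes\mathrm{id})-\mu\circ(\mathrm{id}\otimes\mu)$, $(\Delta\otimes\mathrm{id})\circ\Delta-(\mathrm{id}\otimes\Delta)\circ\Delta$,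 $\Delta\circ\mu-(\mathrm{id}\otimes\mu)\circ(\Delta\otimes\mathrm{id})-(\mu\otimes\mathrm{id})\circ(\mathrm{id}\otimes\Delta)$ (Leibniz), and $\mu\circ\Delta$. Iterated operations: $\Delta^{(1)}=\mathrm{id}$, $\Delta^{(n+1)}=(\Delta^{(n)}\otimes\mathrm{id})\circ\Delta\in\mathcal{MS}(1,n+1)$; $\mu^{(1)}=\mathrm{id}$, $\mu^{(k+1)}=\mu\circ(\mu^{(k)}\otimes\mathrm{id})\in\mathcal{MS}(k+1,1)$. For $a=(a_1,\dots,a_k)\in A(k,n)$, the element $\langle a\rangle\in\mathcal{MS}(k,n)$ is the graph obtained as follows: the $i$-th input passes through $\Delta^{(a_i+1)}$, producing outputs $o_{i,1},\dots,o_{i,a_i+1}$; list all these outputs in the order $o_{1,1},\dots,o_{1,a_1+1},o_{2,1},\dots,o_{k,a_k+1}$ and, for each $i=1,\dots,k-1$, join the last output $o_{i,a_i+1}$ of the $i$-th block with the first output $o_{i+1,1}$ of the $(i+1)$-st block by the product $\mu$ (when a block has a single output, consecutive joins form an iterated product, well defined by associativity); the resulting $1+a_1+\dots+a_k=n$ strands, in the listed order, are the outputs $1,\dots,n$. For $k=n=2$ this gives $\langle(1,0)\rangle=(\mathrm{id}\otimes\mu)\circ(\Delta\otimes\mathrm{id})$ and $\langle(0,1)\rangle=(\mu\otimes\mathrm{id})\circ(\mathrm{id}\otimes\Delta)$. *)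

(* Defs.v *)
From HB Require Import structures.
From mathcomp Require Import all_boot all_order all_algebra.
Set Implicit Arguments. Unset Strict Implicit. Unset Printing Implicit Defensive.
Import Order.TTheory GRing.Theory Num.Theory.
Local Open Scope ring_scope.

Definition hcast (H : nat -> nat -> Type) (n n' m m' : nat)
  (e1 : n = n') (e2 : m = m') (f : H n m) : H n' m' :=
  ecast x (H x m') e1 (ecast y (H n y) e2 f).

Definition ksgn (R : pzRingType) (d e : int) : R :=
  if odd `|d|%N && odd `|e|%N then -1 else 1.
Definition ksgn1 (R : pzRingType) (d : int) : R :=
  if odd `|d|%N then -1 else 1.

(* A dg prop over the commutative ring R: a strict symmetric monoidal  *)
(* category enriched in chain complexes (homological grading, the      *)
(* differential has degree -1, Koszul sign rule), whose objects are    *)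
(* the natural numbers n (= n copies of the generating object) with    *)
(* tensor product of objects given by addition.                        *)
(* phom n m = P(n,m) (total module), phomog n m d = its degree-d part.    *)
Unset Implicit Arguments.
Record dgProp (R : comPzRingType) := DgProp {
  phom : nat -> nat -> lmodType R;
  phomog : forall n m, int -> pred (phom n m);
  pcompo : forall n m p, phom m p -> phom n m -> phom n p;
  ptens : forall n m n' m', phom n m -> phom n' m' -> phom (n + n') (m + m');
  pid : forall n, phom n n;
  psym : forall n m, phom (n + m) (m + n);
  pdif : forall n m, phom n m -> phom n m;
  homog0 : forall n m d, phomog n m d 0;
  homogD : forall n m d (f g : phom n m),
      phomog n m d f -> phomog n m d g -> phomog n m d (f + g);
  homogZ : forall n m d (a : R) (f : phom n m),
      phomog n m d f -> phomog n m d (a *: f);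
  compDl : forall n m p (g g' : phom m p) (f : phom n m),
      pcompo n m p (g + g') f = pcompo n m p g f + pcompo n m p g' f;
  compZl : forall n m p (a : R) (g : phom m p) (f : phom n m),
      pcompo n m p (a *: g) f = a *: pcompo n m p g f;
  compDr : forall n m p (g : phom m p) (f f' : phom n m),
      pcompo n m p g (f + f') = pcompo n m p g f + pcompo n m p g f';
  compZr : forall n m p (a : R) (g : phom m p) (f : phom n m),
      pcompo n m p g (a *: f) = a *: pcompo n m p g f;
  tensDl : forall n m n' m' (f f' : phom n m) (g : phom n' m'),
      ptens n m n' m' (f + f') g = ptens n m n' m' f g + ptens n m n' m' f' g;
  tensZl : forall n m n' m' (a : R) (f : phom n m) (g : phom n' m'),
      ptens n m n' m' (a *: f) g = a *: ptens n m n' m' f g;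
  tensDr : forall n m n' m' (f : phom n m) (g g' : phom n' m'),
      ptens n m n' m' f (g + g') = ptens n m n' m' f g + ptens n m n' m' f g';
  tensZr : forall n m n' m' (a : R) (f : phom n m) (g : phom n' m'),
      ptens n m n' m' f (a *: g) = a *: ptens n m n' m' f g;
  difD : forall n m (f g : phom n m), pdif n m (f + g) = pdif n m f + pdif n m g;
  difZ : forall n m (a : R) (f : phom n m), pdif n m (a *: f) = a *: pdif n m f;
  homog_comp : forall n m p d e (g : phom m p) (f : phom n m),
      phomog m p e g -> phomog n m d f -> phomog n p (e + d) (pcompo n m p g f);
  homog_tens : forall n m n' m' d e (f : phom n m) (g : phom n' m'),
      phomog n m d f -> phomog n' m' e g ->
      phomog (n + n') (m + m') (d + e) (ptens n m n' m' f g);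
  homog_id : forall n, phomog n n 0 (pid n);
  homog_sym : forall n m, phomog (n + m) (m + n) 0 (psym n m);
  homog_dif : forall n m d (f : phom n m),
      phomog n m d f -> phomog n m (d - 1) (pdif n m f);
  comp_idl : forall n m (f : phom n m), pcompo n m m (pid m) f = f;
  comp_idr : forall n m (f : phom n m), pcompo n n m f (pid n) = f;
  compA : forall n m p q (h : phom p q) (g : phom m p) (f : phom n m),
      pcompo n m q (pcompo m p q h g) f = pcompo n p q h (pcompo n m p g f);
  tensA : forall n1 m1 n2 m2 n3 m3 (f : phom n1 m1) (g : phom n2 m2)
      (h : phom n3 m3),
      ptens (n1 + n2) (m1 + m2) n3 m3 (ptens n1 m1 n2 m2 f g) h =
      @hcast (fun x y => phom x y : Type) _ _ _ _ (addnA n1 n2 n3) (addnA m1 m2 m3)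
        (ptens n1 m1 (n2 + n3) (m2 + m3) f (ptens n2 m2 n3 m3 g h));
  tens_id0l : forall n m (f : phom n m), ptens 0 0 n m (pid 0) f = f;
  tens_id0r : forall n m (f : phom n m),
      ptens n m 0 0 f (pid 0) = @hcast (fun x y => phom x y : Type) _ _ _ _ (esym (addn0 n)) (esym (addn0 m)) f;
  tens_id : forall n m, ptens n n m m (pid n) (pid m) = pid (n + m);
  interchange : forall n m p n' m' p' d d'
      (g : phom m p) (g' : phom m' p') (f : phom n m) (f' : phom n' m'),
      phomog n m d f -> phomog m' p' d' g' ->
      pcompo (n + n') (m + m') (p + p') (ptens m p m' p' g g') (ptens n m n' m' f f')
      = ksgn R d' d *: ptens n p n' p' (pcompo n m p g f) (pcompo n' m' p' g' f');
  sym_nat : forall n m n' m' d e (f : phom n n') (g : phom m m'),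
      phomog n n' d f -> phomog m m' e g ->
      pcompo (n + m) (n' + m') (m' + n') (psym n' m') (ptens n n' m m' f g)
      = ksgn R d e *:
        pcompo (n + m) (m + n) (m' + n') (ptens m m' n n' g f) (psym n m);
  sym_invol : forall n m,
      pcompo (n + m) (m + n) (n + m) (psym m n) (psym n m) = pid (n + m);
  sym_hexagon : forall n m p,
      psym n (m + p) =
      pcompo (n + (m + p)) (m + n + p) (m + p + n)
        (@hcast (fun x y => phom x y : Type) _ _ _ _ (addnA m n p) (addnA m p n)
           (ptens m m (n + p) (p + n) (pid m) (psym n p)))
        (@hcast (fun x y => phom x y : Type) _ _ _ _ (esym (addnA n m p)) (erefl _)
           (ptens (n + m) (m + n) p p (psym n m) (pid p)));
  sym_0l : forall n, psym 0 n = @hcast (fun x y => phom x y : Type) _ _ _ _ (erefl n) (esym (addn0 n)) (pid n);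
  difK : forall n m (f : phom n m), pdif n m (pdif n m f) = 0;
  dif_comp : forall n m p e (g : phom m p) (f : phom n m),
      phomog m p e g ->
      pdif n p (pcompo n m p g f)
      = pcompo n m p (pdif m p g) f + ksgn1 R e *: pcompo n m p g (pdif n m f);
  dif_tens : forall n m n' m' d (f : phom n m) (g : phom n' m'),
      phomog n m d f ->
      pdif (n + n') (m + m') (ptens n m n' m' f g)
      = ptens n m n' m' (pdif n m f) g + ksgn1 R d *: ptens n m n' m' f (pdif n' m' g);
  dif_id : forall n, pdif n n (pid n) = 0;
  dif_sym : forall n m, pdif (n + m) (m + n) (psym n m) = 0
}.

Set Implicit Arguments.
Arguments phom {R} d n m : rename.
Arguments phomog {R P n m} d f : rename.
Arguments pcompo {R P n m p} g f : rename.
Arguments ptens {R P n m n' m'} f g : rename.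
Arguments pid {R} P n : rename.
Arguments psym {R} P n m : rename.
Arguments pdif {R P n m} f : rename.

Section Ops.
Variables (R : comPzRingType) (P : dgProp R).
Variables (Del : phom P 1 2) (mu : phom P 2 1).

Lemma addn1_eq (n : nat) : (n + 1 = n.+1)%N. Proof. by rewrite addn1. Qed.
Lemma J_eq1 (M a : nat) : (M + 2 + a = M.+1 + a.+1)%N.
Proof. by rewrite !addnS !addSn addn0. Qed.
Lemma J_eq2 (M a : nat) : (M + 1 + a = (M + a).+1)%N.
Proof. by rewrite addn1. Qed.

(* DeltaS n = Delta^{(n+1)} in P(1, n+1) *)
Fixpoint DeltaS (n : nat) : phom P 1 n.+1 :=
  match n return phom P 1 n.+1 with
  | 0 => pid P 1
  | n'.+1 => @hcast (fun x y => phom P x y : Type) _ _ _ _ (erefl 1%N) (addn1_eq n'.+1)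
               (pcompo (ptens (DeltaS n') (pid P 1)) Del)
  end.

(* Delta^{(n)} in P(1,n); junk value 0 for n = 0 *)
Definition DeltaI (n : nat) : phom P 1 n :=
  match n return phom P 1 n with 0 => 0 | n'.+1 => DeltaS n' end.

(* muS k = mu^{(k+1)} in P(k+1, 1) *)
Fixpoint muS (k : nat) : phom P k.+1 1 :=
  match k return phom P k.+1 1 with
  | 0 => pid P 1
  | k'.+1 => @hcast (fun x y => phom P x y : Type) _ _ _ _ (addn1_eq k'.+1) (erefl 1%N)
               (pcompo mu (ptens (muS k') (pid P 1)))
  end.

(* mu^{(k)} in P(k,1); junk value 0 for k = 0 *)
Definition muI (k : nat) : phom P k 1 :=
  match k return phom P k 1 with 0 => 0 | k'.+1 => muS k' end.

Definition Jn (M a : nat) : phom P (M.+1 + a.+1) (M + a).+1 :=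
  @hcast (fun x y => phom P x y : Type) _ _ _ _ (J_eq1 M a) (J_eq2 M a) (ptens (ptens (pid P M) mu) (pid P a)).

(* outputs of the first k+1 blocks, minus one *)
Fixpoint outs (f : nat -> nat) (k : nat) : nat :=
  match k with 0 => f 0 | k'.+1 => (outs f k' + f k'.+1)%N end.

(* brk f k = <(f 0, ..., f k)> : the Delta^{(f i + 1)} are placed in
   parallel and the joins i = 1, ..., k are applied successively in
   this order (left-to-right). *)
Fixpoint brk (f : nat -> nat) (k : nat) : phom P k.+1 (outs f k).+1 :=
  match k return phom P k.+1 (outs f k).+1 with
  | 0 => DeltaS (f 0)
  | k'.+1 => @hcast (fun x y => phom P x y : Type) _ _ _ _ (addn1_eq k'.+1) (erefl _)
       (pcompo (Jn (outs f k') (f k'.+1)) (ptens (brk f k') (DeltaS (f k'.+1))))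
  end.

Definition tcastT (k m n : nat) (f : phom P k m) : phom P k n :=
  match m =P n with ReflectT e => @hcast (fun x y => phom P x y : Type) _ _ _ _ (erefl k) e f | ReflectF _ => 0 end.

Definition bracket (k n : nat) : k.-tuple 'I_n -> phom P k n :=
  match k return k.-tuple 'I_n -> phom P k n with
  | 0 => fun _ => 0
  | k'.+1 => fun a =>
      tcastT n (brk (fun i => nth 0%N [seq nat_of_ord x | x <- a] i) k')
  end.

End Ops.

(* Main.v *)
Require Import Defs.
From HB Require Import structures.
From mathcomp Require Import all_boot all_order all_algebra.
From Stdlib Require Import Eqdep_dec.
Import GRing.Theory.
Set Implicit Arguments. Unset Strict Implicit. Unset Printing Implicit Defensive.
Local Open Scope ring_scope.

Local Arguments compDl {R d0 n m p} g g' f.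
Local Arguments compDr {R d0 n m p} g f f'.
Local Arguments compZl {R d0 n m p} a g f.
Local Arguments compZr {R d0 n m p} a g f.
Local Arguments tensDl {R d0 n m n' m'} f f' g.
Local Arguments tensZl {R d0 n m n' m'} a f g.
Local Arguments tensZr {R d0 n m n' m'} a f g.
Local Arguments tensA {R d0 n1 m1 n2 m2 n3 m3} f g h.
Local Arguments tens_id0r {R d0 n m} f.
Local Arguments tens_id0l {R d0 n m} f.
Local Arguments tens_id {R} d0 n m.
Local Arguments homog_tens {R d0 n m n' m' d e f g} _ _.
Local Arguments homog_comp {R d0 n m p d e g f} _ _.
Local Arguments homog_id {R} d0 n.
Local Arguments comp_idl {R d0 n m} f.
Local Arguments comp_idr {R d0 n m} f.

Section Pk.
Variables (R : comPzRingType) (P : dgProp R).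

Definition pk n m (f : phom P n m) : {nm : nat * nat & phom P nm.1 nm.2} :=
  existT (fun nm : nat * nat => (phom P nm.1 nm.2 : Type)) (n, m) f.

Lemma nn_dec : forall x y : nat * nat, {x = y} + {x <> y}.
Proof. move=> x y; case: (x =P y) => e; [left|right] => //. Qed.

Lemma pk_inj n m (f g : phom P n m) : pk f = pk g -> f = g.
Proof. move=> H. exact: (inj_pair2_eq_dec _ nn_dec _ _ _ _ H). Qed.

Lemma pk_idx n m n' m' (f : phom P n m) (g : phom P n' m') :
  pk f = pk g -> n = n' /\ m = m'.
Proof. by move=> /(f_equal (@projT1 _ _)) [-> ->]. Qed.

Lemma pk_hcast n m n' m' (e1 : n = n') (e2 : m = m') (f : phom P n m) :
  pk (@hcast (fun x y => phom P x y : Type) _ _ _ _ e1 e2 f) = pk f.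
Proof. by case: n' / e1; case: m' / e2. Qed.

Lemma pk_compo n m p n' m' p' (g : phom P m p) (g' : phom P m' p')
  (f : phom P n m) (f' : phom P n' m') :
  pk g = pk g' -> pk f = pk f' -> pk (pcompo g f) = pk (pcompo g' f').
Proof.
move=> Hg Hf; case: (pk_idx Hg) => e1 e2; subst.
case: (pk_idx Hf) => e1 _; subst.
by rewrite (pk_inj Hg) (pk_inj Hf).
Qed.

Lemma pk_tens n m n' m' a b a' b' (f : phom P n m) (g : phom P n' m')
  (f' : phom P a b) (g' : phom P a' b') :
  pk f = pk f' -> pk g = pk g' -> pk (ptens f g) = pk (ptens f' g').
Proof.
move=> Hf Hg; case: (pk_idx Hf) => e1 e2; subst.
case: (pk_idx Hg) => e1 e2; subst.
by rewrite (pk_inj Hg) (pk_inj Hf).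
Qed.

Definition cst n m n' m' (f : phom P n' m') : phom P n m :=
  match n' =P n, m' =P m with
  | ReflectT e1, ReflectT e2 => @hcast (fun x y => phom P x y : Type) _ _ _ _ e1 e2 f
  | _, _ => 0 end.

Lemma pk_cst n m n' m' (f : phom P n' m') : n' = n -> m' = m -> pk (cst n m f) = pk f.
Proof.
move=> E1 E2; rewrite /cst; case: eqP => [e1|/(_ E1) []].
by case: eqP => [e2|/(_ E2) []]; rewrite pk_hcast.
Qed.

Lemma cst_pk n m n' m' (f : phom P n m) (g : phom P n' m') : pk f = pk g -> f = cst n m g.
Proof.
move=> H; case: (pk_idx H) => e1 e2; subst.
by apply: pk_inj; rewrite pk_cst.
Qed.

Lemma cst_id n m (f : phom P n m) : cst n m f = f.
Proof. by apply/esym/cst_pk. Qed.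

Lemma cst_congr n m n' m' a b (g : phom P n' m') (g' : phom P a b) :
  pk g = pk g' -> cst n m g = cst n m g'.
Proof.
move=> H; case: (pk_idx H) => e1 e2; subst.
by rewrite (pk_inj H).
Qed.

Lemma cstD n m n' m' (f g : phom P n' m') : cst n m (f + g) = cst n m f + cst n m g.
Proof.
rewrite /cst; case: eqP => [e1|_]; last by rewrite addr0.
case: eqP => [e2|_]; last by rewrite addr0.
by case: n / e1; case: m / e2.
Qed.

Lemma cst0 n m n' m' : cst n m (0 : phom P n' m') = 0.
Proof.
rewrite /cst; case: eqP => [e1|_] //; case: eqP => [e2|_] //.
by case: n / e1; case: m / e2.
Qed.

Lemma cst_sum n m n' m' (I : Type) (r : seq I) (Q : pred I) (F : I -> phom P n' m') :
  cst n m (\sum_(i <- r | Q i) F i) = \sum_(i <- r | Q i) cst n m (F i).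
Proof. exact: (big_morph _ (@cstD n m n' m') (@cst0 n m n' m')). Qed.

Lemma pk_tcastT k m n (f : phom P k m) : m = n -> pk (tcastT n f) = pk f.
Proof. by move=> E; rewrite /tcastT; case: eqP => [e|/(_ E) []]; rewrite pk_hcast. Qed.

Lemma tcastT_cst k m n (f : phom P k m) : tcastT n f = cst k n f.
Proof.
case: (m =P n) => e.
  by apply: cst_pk; rewrite pk_tcastT.
rewrite /tcastT /cst; case: eqP => // _ .
by case: eqP.
Qed.

Lemma compo0l n m p (f : phom P n m) : pcompo (0 : phom P m p) f = 0.
Proof. by rewrite -(scale0r (0 : phom P m p)) compZl scale0r. Qed.
Lemma compo0r n m p (g : phom P m p) : pcompo g (0 : phom P n m) = 0.
Proof. by rewrite -(scale0r (0 : phom P n m)) compZr scale0r. Qed.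
Lemma tens0l n m n' m' (g : phom P n' m') : ptens (0 : phom P n m) g = 0.
Proof. by rewrite -(scale0r (0 : phom P n m)) tensZl scale0r. Qed.
Lemma tens0r n m n' m' (f : phom P n m) : ptens f (0 : phom P n' m') = 0.
Proof. by rewrite -(scale0r (0 : phom P n' m')) tensZr scale0r. Qed.

Lemma compo_suml n m p (I : Type) (r : seq I) (Q : pred I) (F : I -> phom P m p) (f : phom P n m) :
  pcompo (\sum_(i <- r | Q i) F i) f = \sum_(i <- r | Q i) pcompo (F i) f.
Proof. exact: (big_morph (fun g => pcompo g f) (fun g g' => compDl g g' f) (compo0l _ _)). Qed.
Lemma compo_sumr n m p (I : Type) (r : seq I) (Q : pred I) (F : I -> phom P n m) (g : phom P m p) :
  pcompo g (\sum_(i <- r | Q i) F i) = \sum_(i <- r | Q i) pcompo g (F i).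
Proof. exact: (big_morph (fun f => pcompo g f) (fun f f' => compDr g f f') (compo0r _ _)). Qed.
Lemma tens_suml n m n' m' (I : Type) (r : seq I) (Q : pred I) (F : I -> phom P n m) (g : phom P n' m') :
  ptens (\sum_(i <- r | Q i) F i) g = \sum_(i <- r | Q i) ptens (F i) g.
Proof. exact: (big_morph (fun f => ptens f g) (fun f f' => tensDl f f' g) (tens0l _ _ _)). Qed.

Lemma homog_hcast d n m n' m' (e1 : n = n') (e2 : m = m') (f : phom P n m) :
  phomog d f -> phomog d (@hcast (fun x y => phom P x y : Type) _ _ _ _ e1 e2 f).
Proof. by case: n' / e1; case: m' / e2. Qed.

Lemma ichg0 n m p n' m' p' d (g : phom P m p) (g' : phom P m' p') (f : phom P n m) (f' : phom P n' m') :
  phomog d f -> phomog 0 g' ->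
  pcompo (ptens g g') (ptens f f') = ptens (pcompo g f) (pcompo g' f').
Proof. by move=> Hf Hg; rewrite (@Defs.interchange _ _ _ _ _ _ _ _ _ _ g g' f f' Hf Hg) /ksgn /= scale1r. Qed.

Lemma ichg0' n m p n' m' p' d (g : phom P m p) (g' : phom P m' p') (f : phom P n m) (f' : phom P n' m') :
  phomog 0 f -> phomog d g' ->
  pcompo (ptens g g') (ptens f f') = ptens (pcompo g f) (pcompo g' f').
Proof. by move=> Hf Hg; rewrite (@Defs.interchange _ _ _ _ _ _ _ _ _ _ g g' f f' Hf Hg) /ksgn /= andbF scale1r. Qed.

Lemma pk_id n n' : n = n' -> pk (pid P n) = pk (pid P n').
Proof. by move=> ->. Qed.

Lemma pk_tensA n1 m1 n2 m2 n3 m3 (f : phom P n1 m1) (g : phom P n2 m2) (h : phom P n3 m3) :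
  pk (ptens (ptens f g) h) = pk (ptens f (ptens g h)).
Proof. by rewrite tensA pk_hcast. Qed.

Lemma pk_tens0r n m (f : phom P n m) : pk (ptens f (pid P 0)) = pk f.
Proof. by rewrite tens_id0r pk_hcast. Qed.

End Pk.
Arguments ichg0 {R P n m p n' m' p' d g g' f f'}.
Arguments ichg0' {R P n m p n' m' p' d g g' f f'}.
Arguments pk_tens {R P n m n' m' a b a' b' f g f' g'}.
Arguments pk_compo {R P n m p n' m' p' g g' f f'}.

Section Alg.
Variables (R : comPzRingType) (P : dgProp R).
Variables (Del : phom P 1 2) (mu : phom P 2 1).
Hypothesis hDel : phomog 0 Del.
Hypothesis hmu : phomog 1 mu.
Hypothesis r_leibniz : pcompo Del mu =
      pcompo (ptens (pid P 1) mu) (ptens Del (pid P 1))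
      + pcompo (ptens mu (pid P 1)) (ptens (pid P 1) Del).

Notation D := (DeltaS Del).

Lemma D0 : D 0 = pid P 1. Proof. by []. Qed.
Lemma DS s : D s.+1 = @hcast (fun x y => phom P x y : Type) _ _ _ _ (erefl 1%N) (addn1_eq s.+1)
               (pcompo (ptens (D s) (pid P 1)) Del).
Proof. by []. Qed.
Lemma muS0 : muS mu 0 = pid P 1. Proof. by []. Qed.
Lemma muSS k : muS mu k.+1 = @hcast (fun x y => phom P x y : Type) _ _ _ _ (addn1_eq k.+1) (erefl 1%N)
               (pcompo mu (ptens (muS mu k) (pid P 1))).
Proof. by []. Qed.

Lemma homog_D s : phomog 0 (D s).
Proof.
elim: s => [|s IH]; first exact: homog_id.
rewrite DS; apply: homog_hcast.
have := homog_comp (homog_tens IH (homog_id P 1)) hDel.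
by rewrite !addr0.
Qed.

Lemma homog_DD a b : phomog 0 (ptens (D a) (D b)).
Proof. by have := homog_tens (homog_D a) (homog_D b); rewrite addr0. Qed.

Lemma homog_muS K : exists d, phomog d (muS mu K).
Proof.
elim: K => [|K [d IH]]; first by exists 0; exact: homog_id.
eexists; rewrite muSS; apply: homog_hcast.
exact: (homog_comp hmu (homog_tens IH (homog_id P 1))).
Qed.

Lemma pk_D a b : a = b -> pk (D a) = pk (D b).
Proof. by move=> ->. Qed.

Lemma pk_Jn M a M' a' : M = M' -> a = a' -> pk (Jn mu M a) = pk (Jn mu M' a').
Proof. by move=> -> ->. Qed.

Definition TT N (i : nat) := cst 2 N.+1 (pcompo (Jn mu i (N - i)) (ptens (D i) (D (N - i)))).

Lemma stepA N : pcompo (D N) mu = \sum_(i < N.+1) TT N i.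
Proof.
elim: N => [|N IH].
  rewrite big_ord1 /TT; apply: cst_pk; rewrite /= ?D0.
  rewrite comp_idl tens_id comp_idr /Jn pk_hcast pk_tens0r tens_id0l //.
rewrite big_ord_recr.
set X1 := pcompo (ptens (D N) (pid P 1)) (pcompo (ptens (pid P 1) mu) (ptens Del (pid P 1))).
set X2 := pcompo (ptens (D N) (pid P 1)) (pcompo (ptens mu (pid P 1)) (ptens (pid P 1) Del)).
have -> : pcompo (D N.+1) mu = cst 2 N.+2 (X1 + X2).
  apply: cst_pk; rewrite /X1 /X2 -compDr -r_leibniz -Defs.compA.
  by apply: pk_compo => //; rewrite DS pk_hcast.
rewrite cstD addrC; congr (_ + _).
  have -> : X2 = pcompo (ptens (pcompo (D N) mu) (pid P 1)) (ptens (pid P 1) Del).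
    rewrite /X2 -Defs.compA (ichg0 hmu (homog_id P 1)) comp_idl //.
  rewrite IH tens_suml compo_suml cst_sum; apply: eq_bigr => i _.
  rewrite /TT; apply: cst_congr.
  have ltiN : (i <= N)%N by rewrite -ltnS.
  rewrite [nat_of_ord (widen_ord _ _)]/= subSn //.
  set j := (N - i)%N.
  rewrite (pk_compo (g' := ptens (pcompo (Jn mu i j) (ptens (D i) (D j))) (pid P 1))
    (f' := ptens (pid P 1) Del)) //; last first.
    by apply: pk_tens => //; apply: pk_cst => //; rewrite /j subnKC.
  have E2 := ichg0 (g := Jn mu i j) (g' := pid P 1) (f := ptens (D i) (D j)) (f' := pid P 1) (homog_DD i j) (homog_id P 1).
  rewrite comp_idl in E2; rewrite -E2 Defs.compA.
  apply: pk_compo.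
    transitivity (pk (ptens (ptens (pid P i) mu) (pid P j.+1))); last by rewrite /Jn pk_hcast.
    rewrite /Jn (pk_tens (f' := ptens (ptens (pid P i) mu) (pid P j)) (g' := pid P 1)) ?pk_hcast //.
    rewrite pk_tensA tens_id; apply: pk_tens => //; apply: pk_id; rewrite addn1 //.
  transitivity (pk (pcompo (ptens (D i) (ptens (D j) (pid P 1))) (ptens (pid P 1) Del))).
    by apply: pk_compo => //; exact: pk_tensA.
  have hg' : phomog 0 (ptens (D j) (pid P 1)).
    by have := homog_tens (homog_D j) (homog_id P 1); rewrite addr0.
  rewrite (ichg0' (homog_id P 1) hg') comp_idr.
  by apply: pk_tens => //; rewrite DS pk_hcast.
rewrite /TT; apply: cst_congr; rewrite [nat_of_ord ord_max]/=.
rewrite subnn /X1 -Defs.compA (ichg0' (homog_id P 1) (homog_id P 1)) comp_idr comp_idl.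
symmetry.
transitivity (pk (pcompo (ptens (pid P N.+1) mu)
   (pcompo (ptens (D N) (pid P 2)) (ptens Del (pid P 1))))).
  apply: pk_compo; first by rewrite /Jn pk_hcast pk_tens0r.
  transitivity (pk (ptens (pcompo (ptens (D N) (pid P 1)) Del) (pid P 1))).
    by apply: pk_tens => //; rewrite DS pk_hcast.
  have E3 := ichg0 (g := ptens (D N) (pid P 1)) (g' := pid P 1) (f := Del) (f' := pid P 1) hDel (homog_id P 1).
  rewrite comp_idl in E3; rewrite -E3.
  apply: pk_compo => //.
  by rewrite pk_tensA tens_id.
rewrite -Defs.compA (ichg0' (homog_D N) hmu) comp_idl comp_idr //.
Qed.

End Alg.
Lemma sum_rcons (V : nmodType) (T : finType) K (F : K.+1.-tuple T -> V) :
  \sum_(a : K.+1.-tuple T) F a = \sum_(t : K.-tuple T) \sum_(x : T) F (rcons_tuple t x).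
Proof.
rewrite pair_bigA /=.
rewrite (reindex (fun p : K.-tuple T * T => rcons_tuple p.1 p.2)) //.
apply: onW_bij; apply: inj_card_bij.
  move=> [t x] [t' x'] /(congr1 val) /= /rcons_inj [/val_inj -> ->] //.
by rewrite card_prod !card_tuple expnSr.
Qed.

Lemma outs_ext (f g : nat -> nat) K : (forall i, (i <= K)%N -> f i = g i) -> outs f K = outs g K.
Proof.
elim: K => [|K IH] H /=; first exact: H.
by rewrite IH ?H // => i hi; apply: H; apply: leqW.
Qed.

Lemma outs_nth (s : seq nat) K : (K < size s)%N -> outs (fun i => nth 0%N s i) K = sumn (take K.+1 s).
Proof.
elim: K => [|K IH] hK /=.
  by rewrite (take_nth 0%N hK) take0 /= addn0.
by rewrite IH ?(ltnW hK) // (take_nth 0%N hK) sumn_rcons.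
Qed.

Section Alg2.
Variables (R : comPzRingType) (P : dgProp R).
Variables (Del : phom P 1 2) (mu : phom P 2 1).
Hypothesis hDel : phomog 0 Del.
Hypothesis hmu : phomog 1 mu.
Hypothesis r_leibniz : pcompo Del mu =
      pcompo (ptens (pid P 1) mu) (ptens Del (pid P 1))
      + pcompo (ptens mu (pid P 1)) (ptens (pid P 1) Del).

Notation D := (DeltaS Del).

Lemma brkS f K : brk Del mu f K.+1 = @hcast (fun x y => phom P x y : Type) _ _ _ _ (addn1_eq K.+1) (erefl _)
       (pcompo (Jn mu (outs f K) (f K.+1)) (ptens (brk Del mu f K) (D (f K.+1)))).
Proof. by []. Qed.

Lemma brk_ext (f g : nat -> nat) K : (forall i, (i <= K)%N -> f i = g i) ->
  pk (brk Del mu f K) = pk (brk Del mu g K).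
Proof.
elim: K => [|K IH] H; first by apply: pk_D; apply: H.
rewrite !brkS !pk_hcast; apply: pk_compo.
  by apply: pk_Jn; [apply: outs_ext => i hi; apply: H; apply: leqW | apply: H].
apply: pk_tens; first by apply: IH => i hi; apply: H; apply: leqW.
by apply: pk_D; apply: H.
Qed.

Lemma stepB K : forall N M, (N < M)%N -> pcompo (D N) (muS mu K) =
  \sum_(a : K.+1.-tuple 'I_M | (1 + sumn [seq nat_of_ord x | x <- a] == N.+1)%N)
     tcastT N.+1 (brk Del mu (fun i => nth 0%N [seq nat_of_ord x | x <- a] i) K).
Proof.
elim: K => [|K IH] N M ltNM.
  rewrite muS0 comp_idr big_mkcond sum_rcons.
  rewrite (big_pred1 [tuple]); last by move=> t; apply/esym/eqP; apply: tuple0.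
  rewrite (bigD1 (Ordinal ltNM)) //= big1 ?addr0.
    by rewrite addn0 eqxx tcastT_cst cst_id.
  move=> x /negbTE hx.
  case: ifP => // /eqnP e; move: hx.
  have -> : x = Ordinal ltNM by apply: ord_inj; move: e; rewrite addn0 add1n => -[].
  by rewrite eqxx.
have -> : pcompo (D N) (muS mu K.+1) =
    cst K.+2 N.+1 (pcompo (pcompo (D N) mu) (ptens (muS mu K) (pid P 1))).
  apply: cst_pk; rewrite muSS Defs.compA; apply: pk_compo => //; exact: pk_hcast.
rewrite (stepA hDel hmu r_leibniz) (compo_suml (index_enum _)) cst_sum.
have step : forall i : 'I_N.+1,
  cst K.+2 N.+1 (pcompo (TT Del mu N i) (ptens (muS mu K) (pid P 1))) =
  \sum_(t : K.+1.-tuple 'I_M | (1 + sumn [seq nat_of_ord x | x <- t] == i.+1)%N)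
     cst K.+2 N.+1 (pcompo (Jn mu i (N - i))
        (ptens (tcastT i.+1 (brk Del mu (fun j => nth 0%N [seq nat_of_ord x | x <- t] j) K)) (D (N - i)))).
  move=> i; have [d hd] := homog_muS hmu K.
  have hiN : (i <= N)%N by rewrite -ltnS.
  transitivity (cst K.+2 N.+1 (pcompo (Jn mu i (N - i)) (ptens (pcompo (D i) (muS mu K)) (D (N - i))))).
    apply: cst_congr; rewrite /TT.
    transitivity (pk (pcompo (pcompo (Jn mu i (N - i)) (ptens (D i) (D (N - i)))) (ptens (muS mu K) (pid P 1)))).
      by apply: pk_compo => //; apply: pk_cst => //; rewrite subnKC.
    by rewrite Defs.compA (ichg0 hd (homog_D hDel _)) comp_idr.
  rewrite (IH i M); last by apply: leq_ltn_trans ltNM.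
  by rewrite (tens_suml (index_enum _)) (compo_sumr (index_enum _)) cst_sum.
rewrite (eq_bigr _ (fun i _ => step i)).
under eq_bigr => i _ do rewrite big_mkcond.
rewrite exchange_big [RHS]big_mkcond [RHS]sum_rcons.
apply: eq_bigr => t _.
set l := [seq nat_of_ord x | x <- t].
have Hsz : size l = K.+1 by rewrite size_map size_tuple.
have Hmap : forall x : 'I_M, [seq nat_of_ord x0 | x0 <- rcons_tuple t x] = rcons l x.
  by move=> x; rewrite /= map_rcons.
case: (leqP (sumn l) N) => hs.
  have hs' : (sumn l < N.+1)%N by rewrite ltnS.
  have hx : (N - sumn l < M)%N by apply: leq_ltn_trans (leq_subr _ N) ltNM.
  rewrite (bigD1 (Ordinal hs')) //= add1n eqxx big1 ?addr0; last first.
    move=> i /negbTE hi; case: ifP => // /eqP [] e; move: hi.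
    have -> : i = Ordinal hs' by apply: ord_inj; rewrite /= e.
    by rewrite eqxx.
  rewrite (bigD1 (Ordinal hx)) // Hmap ifT; last by rewrite sumn_rcons subnKC // add1n.
  rewrite big1 ?addr0; last first.
    move=> x /negbTE hi; rewrite Hmap sumn_rcons; case: ifP => // /eqP [] e; move: hi.
    have -> : x = Ordinal hx by apply: ord_inj => /=; rewrite -e add0n addKn.
    by rewrite eqxx.
  rewrite [RHS]addr0 [RHS]tcastT_cst; apply: cst_congr; rewrite pk_hcast.
  have Hout : outs (fun j => nth 0%N (rcons l (N - sumn l)%N) j) K = sumn l.
    by rewrite outs_nth ?size_rcons ?Hsz // -cats1 -Hsz take_size_cat.
  have Hlast : nth 0%N (rcons l (N - sumn l)%N) K.+1 = (N - sumn l)%N.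
    by rewrite nth_rcons Hsz ltnn eqxx.
  apply: pk_compo.
    by apply: pk_Jn.
  apply: pk_tens; last by apply: pk_D.
  rewrite pk_tcastT; last by rewrite outs_nth ?Hsz // take_oversize ?Hsz.
  by apply: brk_ext => j hj; rewrite nth_rcons Hsz ltnS hj.
rewrite !big1 // => x _.
  rewrite Hmap sumn_rcons; case: ifP => // /eqP [] e; move: hs; rewrite -e.
  by rewrite ltnNge leq_addr.
case: ifP => // /eqP; rewrite add1n => -[] e; move: hs.
by rewrite e ltnNge -ltnS ltn_ord.
Qed.

End Alg2.

Theorem lemmaA8 (R : comPzRingType) (P : dgProp R)
  (eps : phom P 1 0) (Del : phom P 1 2) (mu : phom P 2 1)
  (* degrees of the generators *)
  (heps : phomog 0 eps) (hDel : phomog 0 Del) (hmu : phomog 1 mu)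
  (* differential on the generators *)
  (deps : pdif eps = 0) (dDel : pdif Del = 0)
  (dmu : pdif mu = ptens eps (pid P 1) - ptens (pid P 1) eps)
  (* relations of S *)
  (r_eps_mu : pcompo eps mu = 0)
  (r_counit_l : pcompo (ptens eps (pid P 1)) Del = pid P 1)
  (r_counit_r : pcompo (ptens (pid P 1) eps) Del = pid P 1)
  (* additional relations of MS *)
  (r_comm : mu = pcompo mu (psym P 1 1))
  (r_assoc : pcompo mu (ptens mu (pid P 1)) = pcompo mu (ptens (pid P 1) mu))
  (r_coassoc : pcompo (ptens Del (pid P 1)) Del = pcompo (ptens (pid P 1) Del) Del)
  (r_leibniz : pcompo Del mu =
      pcompo (ptens (pid P 1) mu) (ptens Del (pid P 1))
      + pcompo (ptens mu (pid P 1)) (ptens (pid P 1) Del))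
  (r_mu_Del : pcompo mu Del = 0)
  (k n : nat) (hk : (1 <= k)%N) (hn : (1 <= n)%N) :
  pcompo (DeltaI Del n) (muI mu k) =
  \sum_(a : k.-tuple 'I_n | (1 + sumn [seq nat_of_ord x | x <- a] == n)%N)
     bracket Del mu a.
Proof.
case: k hk => // K _; case: n hn => // N _.
rewrite /= (stepB hDel hmu r_leibniz K (ltnSn N)).
by apply: eq_bigr => a _.
Qed.
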